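(* Let $k$ be an $\mathbf{F}_p$-algebra, $m\in\mathbf{N}\cup\{\infty\}$, and $A:=k[[\pi]]/(\pi^{m+1})$. The function $\phi:A\to\operatorname{HS}^m(k)[[\pi]]/(\pi^{m+1})$ defined by $$\phi\Big(\sum_{i=0}^ma_i\pi^i\Big):=\sum_{n=0}^m\sum_{i=0}^nd^{[n-i]}a_i\,\pi^n\qquad(a_i\in k)$$ is a ring homomorphism.
   Context: For a ring $R$ and $m\in\mathbf{N}\cup\{\infty\}$, $\operatorname{HS}^m(R):=\mathbf{Z}[d^{[n]}a\mid a\in R,0\le n\le m]/\sim$, where $\sim$ is generated by the relations $d^{[n]}(a+b)=d^{[n]}a+d^{[n]}b$, $d^{[n]}(ab)=\sum_{i+j=n}d^{[i]}a\,d^{[j]}b$, and $d^{[0]}1=1$. Here $\pi^{\infty+1}:=0$, so for $m=\infty$ the rings are ordinary power series rings. *)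

(* Defs.v *)
From HB Require Import structures.
From mathcomp Require Import all_boot all_order all_algebra.
From mathcomp Require Import boolp.
Set Implicit Arguments. Unset Strict Implicit. Unset Printing Implicit Defensive.
Import GRing.Theory.
Local Open Scope ring_scope.

(* m in N ∪ {∞}: [Some M] is M, [None] is ∞.  [le_m m n] means n <= m. *)
Definition le_m (m : option nat) (n : nat) : bool :=
  if m is Some M then (n <= M)%N else true.

Lemma le_m0 m : le_m m 0.
Proof. by case: m. Qed.

(* The ring HS^m(R): the free commutative ring (Z-algebra) on symbols       *)
(* d^[n] a (a in R, 0 <= n <= m), modulo the ideal generated by              *)
(*   d^[n](a+b) = d^[n]a + d^[n]b,  d^[n](ab) = sum_{i+j=n} d^[i]a d^[j]b,    *)
(*   d^[0]1 = 1.                                                             *)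
(* Built as formal ring terms modulo the least congruence containing the     *)
(* commutative ring axioms and these relations.                              *)
Section HSconstruction.
Variables (m : option nat) (R : comPzRingType).

Inductive hsterm : Type :=
  | HVar (a : R) (n : nat) of le_m m n
  | HZero | HOne
  | HAdd of hsterm & hsterm
  | HOpp of hsterm
  | HMul of hsterm & hsterm.

Definition hd (a : R) (n : nat) : hsterm :=
  (if le_m m n as b return le_m m n = b -> hsterm
   then fun h => HVar a h else fun _ => HZero) erefl.

Definition hsum (s : seq hsterm) : hsterm := foldr HAdd HZero s.

Inductive hs_eq : hsterm -> hsterm -> Prop :=
  | hs_refl t : hs_eq t t
  | hs_sym t u : hs_eq t u -> hs_eq u t
  | hs_trans t u v : hs_eq t u -> hs_eq u v -> hs_eq t v
  | hs_add_cong t1 t2 u1 u2 :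
      hs_eq t1 u1 -> hs_eq t2 u2 -> hs_eq (HAdd t1 t2) (HAdd u1 u2)
  | hs_opp_cong t u : hs_eq t u -> hs_eq (HOpp t) (HOpp u)
  | hs_mul_cong t1 t2 u1 u2 :
      hs_eq t1 u1 -> hs_eq t2 u2 -> hs_eq (HMul t1 t2) (HMul u1 u2)
  | hs_addA x y z : hs_eq (HAdd x (HAdd y z)) (HAdd (HAdd x y) z)
  | hs_addC x y : hs_eq (HAdd x y) (HAdd y x)
  | hs_add0 x : hs_eq (HAdd HZero x) x
  | hs_addN x : hs_eq (HAdd (HOpp x) x) HZero
  | hs_mulA x y z : hs_eq (HMul x (HMul y z)) (HMul (HMul x y) z)
  | hs_mulC x y : hs_eq (HMul x y) (HMul y x)
  | hs_mul1 x : hs_eq (HMul HOne x) x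
  | hs_mulDl x y z : hs_eq (HMul (HAdd x y) z) (HAdd (HMul x z) (HMul y z))
  | hs_d_add a b n : le_m m n -> hs_eq (hd (a + b) n) (HAdd (hd a n) (hd b n))
  | hs_d_mul a b n : le_m m n ->
      hs_eq (hd (a * b) n)
            (hsum [seq HMul (hd a i) (hd b (n - i)) | i <- iota 0 n.+1])
  | hs_d_one : hs_eq (hd 1 0) HOne.

Definition HS : Type := {P : hsterm -> Prop | exists t, P = hs_eq t}.

HB.instance Definition _ := gen_eqMixin HS.
HB.instance Definition _ := gen_choiceMixin HS.

Definition hcls (t : hsterm) : HS := exist _ (hs_eq t) (ex_intro _ t erefl).
Definition hrepr (x : HS) : hsterm := sval (cid (proj2_sig x)).

Lemma hreprK x : hcls (hrepr x) = x.
Proof.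
case: x => P HP; rewrite /hrepr /hcls /=.
case: (cid HP) => t /= Pt; subst P.
by congr exist; apply: Prop_irrelevance.
Qed.

Lemma hcls_surj x : exists t, x = hcls t.
Proof. by exists (hrepr x); rewrite hreprK. Qed.

Lemma hsig_eq (P Q : hsterm -> Prop) hp hq :
  P = Q -> exist (fun P => exists t, P = hs_eq t) P hp = exist _ Q hq.
Proof. by move=> E; subst Q; congr exist; apply: Prop_irrelevance. Qed.

Lemma hcls_eq t u : hs_eq t u -> hcls t = hcls u.
Proof.
move=> tu; rewrite /hcls.
have E : hs_eq t = hs_eq u.
  apply: funext => v; apply: propext; split => h.
    exact: hs_trans (hs_sym tu) h.
  exact: hs_trans tu h.
by apply: hsig_eq.
Qed.

Lemma hrepr_cls t : hs_eq (hrepr (hcls t)) t.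
Proof.
rewrite /hrepr /=; case: cid => u /= Hu.
have : hs_eq t t by constructor.
by rewrite Hu.
Qed.

Fact hadd_key : unit. Proof. exact: tt. Qed.
Definition hadd := locked_with hadd_key (fun x y => hcls (HAdd (hrepr x) (hrepr y))).
Fact hopp_key : unit. Proof. exact: tt. Qed.
Definition hopp := locked_with hopp_key (fun x => hcls (HOpp (hrepr x))).
Fact hmul_key : unit. Proof. exact: tt. Qed.
Definition hmul := locked_with hmul_key (fun x y => hcls (HMul (hrepr x) (hrepr y))).
Definition hzero := hcls HZero.
Definition hone := hcls HOne.

Lemma hadd_cls t u : hadd (hcls t) (hcls u) = hcls (HAdd t u).
Proof. by rewrite /hadd locked_withE; apply: hcls_eq; apply: hs_add_cong; apply: hrepr_cls. Qed.
Lemma hopp_cls t : hopp (hcls t) = hcls (HOpp t).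
Proof. by rewrite /hopp locked_withE; apply: hcls_eq; apply: hs_opp_cong; apply: hrepr_cls. Qed.
Lemma hmul_cls t u : hmul (hcls t) (hcls u) = hcls (HMul t u).
Proof. by rewrite /hmul locked_withE; apply: hcls_eq; apply: hs_mul_cong; apply: hrepr_cls. Qed.

Ltac hs_solve :=
  repeat (let x := fresh "x" in move=> x; have [? ->] := hcls_surj x);
  rewrite /hzero /hone;
  repeat (rewrite hopp_cls || rewrite hadd_cls || rewrite hmul_cls);
  apply: hcls_eq;
  first [ exact: hs_addA | exact: hs_addC | exact: hs_add0 | exact: hs_addN
        | exact: hs_mulA | exact: hs_mulC | exact: hs_mul1 | exact: hs_mulDl ].

Lemma haddA : associative hadd. Proof. by hs_solve. Qed.
Lemma haddC : commutative hadd. Proof. by hs_solve. Qed.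
Lemma hadd0 : left_id hzero hadd. Proof. by hs_solve. Qed.
Lemma haddN : left_inverse hzero hopp hadd. Proof. by hs_solve. Qed.

HB.instance Definition _ := GRing.isZmodule.Build HS haddA haddC hadd0 haddN.

Lemma hmulA : associative hmul. Proof. by hs_solve. Qed.
Lemma hmulC : commutative hmul. Proof. by hs_solve. Qed.
Lemma hmul1 : left_id hone hmul. Proof. by hs_solve. Qed.
Lemma hmulDl : left_distributive hmul hadd. Proof. by hs_solve. Qed.

HB.instance Definition _ := GRing.Zmodule_isComPzRing.Build HS hmulA hmulC hmul1 hmulDl.

Definition dHS (a : R) (n : nat) : HS := hcls (hd a n).

End HSconstruction.

(* Truncated power series S[[pi]]/(pi^(m+1)), m in N ∪ {∞}: an element is    *)
(* represented by its coefficient sequence nat -> S, two sequences being     *)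
(* equal when their coefficients of index n <= m agree (pi^(∞+1) = 0).       *)
Section TruncSeries.
Variable S : comPzRingType.
Definition ps_add (f g : nat -> S) : nat -> S := fun n => f n + g n.
Definition ps_mul (f g : nat -> S) : nat -> S :=
  fun n => \sum_(i < n.+1) f i * g (n - i)%N.
Definition ps_one : nat -> S := fun n => (n == 0%N)%:R.
Definition eq_upto (m : option nat) (f g : nat -> S) : Prop :=
  forall n, le_m m n -> f n = g n.
End TruncSeries.
Arguments ps_one {S}.

(* f, given on representatives, is a well-defined ring homomorphism         *)
(* R[[pi]]/(pi^(m+1)) -> S[[pi]]/(pi^(m+1)).                                 *)
Definition trunc_ring_hom (m : option nat) (R S : comPzRingType)
    (f : (nat -> R) -> (nat -> S)) : Prop :=
  [/\ forall a b, eq_upto m a b -> eq_upto m (f a) (f b),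
      forall a b, eq_upto m (f (ps_add a b)) (ps_add (f a) (f b)),
      forall a b, eq_upto m (f (ps_mul a b)) (ps_mul (f a) (f b)) &
      eq_upto m (f ps_one) ps_one].

Definition phi (m : option nat) (k : comPzRingType) (a : nat -> k)
  : nat -> HS m k :=
  fun n => \sum_(i < n.+1) dHS m (a i) (n - i)%N.

(* Main.v *)
Require Import Defs.
From mathcomp Require Import all_boot all_order all_algebra zify.
Import GRing.Theory.
Local Open Scope ring_scope.
Section G.
Variable S : comPzRingType.

Lemma sum_eq1 K i (f : nat -> S) :
  \sum_(l < K) (if (l == i :> nat) then f l else 0) = if (i < K)%N then f i else 0.
Proof.
case: ltnP => h.
  rewrite (bigD1 (Ordinal h)) //= eqxx big1 ?addr0 // => l /negbTE hl.
  by have -> : (nat_of_ord l == i) = false by move: hl; rewrite -val_eqE.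
apply: big1 => l _; case: eqP => // E; move: (ltn_ord l); rewrite E; lia.
Qed.

Definition mono (c : S) (i : nat) : nat -> S := fun l => if l == i then c else 0.

Lemma ps_mul_suml K (F : nat -> nat -> S) g n :
  ps_mul (fun l => \sum_(i < K) F i l) g n = \sum_(i < K) ps_mul (F i) g n.
Proof.
rewrite /ps_mul; under eq_bigr do rewrite mulr_suml.
by rewrite exchange_big.
Qed.

Lemma ps_mul_sumr K (F : nat -> nat -> S) g n :
  ps_mul g (fun l => \sum_(i < K) F i l) n = \sum_(i < K) ps_mul g (F i) n.
Proof.
rewrite /ps_mul; under eq_bigr do rewrite mulr_sumr.
by rewrite exchange_big.
Qed.

Lemma ps_mul_mono c d i j n :
  ps_mul (mono c i) (mono d j) n = mono (c * d) (i + j) n.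
Proof.
rewrite /ps_mul /mono.
under eq_bigr => l _ do rewrite (fun_if (fun x => x * _)) mul0r.
rewrite (sum_eq1 n.+1 i (fun l => c * (if (n - l)%N == j then d else 0))) ltnS.
case: leqP => h.
  have -> : ((n - i)%N == j) = (n == i + j)%N by apply/eqP/eqP; lia.
  by case: eqP; rewrite ?mulr0.
by case: eqP => //; lia.
Qed.

Lemma ps_mul_local (a a' b b' : nat -> S) n :
  (forall l, (l <= n)%N -> a l = a' l) -> (forall l, (l <= n)%N -> b l = b' l) ->
  ps_mul a b n = ps_mul a' b' n.
Proof.
move=> ha hb; apply: eq_bigr => i _.
have hi := ltn_ord i; rewrite ha ?hb //; lia.
Qed.

Lemma trunc_decomp (a : nat -> S) N n : (n <= N)%N ->
  a n = \sum_(i < N.+1) mono (a i) i n.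
Proof.
move=> h; rewrite /mono.
under eq_bigr => i _ do rewrite eq_sym.
by rewrite (sum_eq1 N.+1 n a) ltnS h.
Qed.

Lemma sum_shift K i (F : nat -> S) :
  \sum_(l < K) (if (i <= l)%N then F (l - i)%N else 0) = \sum_(u < K - i) F u.
Proof.
elim: K => [|K IH]; first by rewrite !big_ord0.
rewrite big_ord_recr /= IH.
case: (leqP i K) => h.
  have -> : (K.+1 - i = (K - i).+1)%N by lia.
  by rewrite big_ord_recr.
have -> : (K.+1 - i = K - i)%N by lia.
by rewrite addr0.
Qed.
End G.
Arguments mono {S}.
Arguments sum_eq1 {S}.
Arguments sum_shift {S}.
Arguments trunc_decomp {S}.
Section D.
Variables (m : option nat) (k : comPzRingType).
Local Notation dH := (dHS m).

Lemma dHS_out (a : k) n : ~~ le_m m n -> dH a n = 0.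
Proof.
move=> h; rewrite /dHS /hd.
move: (erefl (le_m m n)); rewrite {2 3}(negbTE h) => _ //.
Qed.

Lemma dHS_add (a b : k) n : dH (a + b) n = dH a n + dH b n.
Proof.
case h: (le_m m n); last by rewrite !dHS_out ?h // addr0.
rewrite /dHS (hcls_eq (hs_d_add a b h)) -hadd_cls //.
Qed.

Lemma hcls_hsum (s : seq (hsterm m k)) : hcls (hsum s) = \sum_(t <- s) hcls t.
Proof.
elim: s => [|t s IH]; first by rewrite big_nil.
by rewrite big_cons /= -IH -hadd_cls.
Qed.

Lemma dHS_mul (a b : k) n : le_m m n ->
  dH (a * b) n = \sum_(i < n.+1) dH a i * dH b (n - i).
Proof.
move=> h; rewrite /dHS (hcls_eq (hs_d_mul a b h)) hcls_hsum big_map.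
have -> : iota 0 n.+1 = index_iota 0 n.+1 by rewrite /index_iota subn0.
rewrite big_mkord; apply: eq_bigr => i _; by rewrite -hmul_cls.
Qed.
End D.

Section P.
Variables (m : option nat) (k : comPzRingType).
Local Notation dH := (dHS m).

Lemma le_m_mono n l : le_m m n -> (l <= n)%N -> le_m m l.
Proof. by case: m => //= M h1 h2; apply: leq_trans h2 h1. Qed.

Lemma dHS0 n : dH (0 : k) n = 0.
Proof.
have := dHS_add m k (0 : k) 0 n; rewrite addr0 => E.
by apply: (@addrI _ (dH (0 : k) n)); rewrite addr0 -E.
Qed.

Lemma dHS_sum K (F : nat -> k) n :
  dH (\sum_(i < K) F i) n = \sum_(i < K) dH (F i) n.
Proof.
by apply: (big_morph (fun x => dH x n)); [move=> x y; apply: dHS_add | apply: dHS0].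
Qed.

Lemma phi_local (a b : nat -> k) n :
  (forall l, (l <= n)%N -> a l = b l) -> phi m a n = phi m b n.
Proof. move=> h; apply: eq_bigr => i _; rewrite h //; have := ltn_ord i; lia. Qed.

Lemma phi_sum K (F : nat -> nat -> k) n :
  phi m (fun l => \sum_(i < K) F i l) n = \sum_(i < K) phi m (F i) n.
Proof.
rewrite /phi; under eq_bigr => t _ do rewrite (dHS_sum K (fun i => F i t)).
by rewrite exchange_big.
Qed.

Lemma phi_mono (c : k) i l :
  phi m (mono c i) l = if (i <= l)%N then dH c (l - i) else 0.
Proof.
rewrite /phi /mono.
under eq_bigr => t _ do rewrite (fun_if (fun x => dH x _)) dHS0.
by rewrite (sum_eq1 l.+1 i (fun t => dH c (l - t))) ltnS.
Qed.

Lemma key (c d : k) i j n : le_m m n ->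
  phi m (mono (c * d) (i + j)) n = ps_mul (phi m (mono c i)) (phi m (mono d j)) n.
Proof.
move=> hn; rewrite phi_mono /ps_mul.
under eq_bigr => l _ do rewrite !phi_mono.
case: leqP => hij; last first.
  apply/esym/big1 => l _; case: (leqP i l) => h1; last by rewrite mul0r.
  case: (leqP j (n - l)) => h2; last by rewrite mulr0.
  have := ltn_ord l; lia.
rewrite dHS_mul; last by apply: le_m_mono hn _; lia.
set L := (n - (i + j))%N.
pose H u := if (u < L.+1)%N then dH c u * dH d (L - u) else 0.
transitivity (\sum_(l < n.+1) (if (i <= l)%N then H (l - i)%N else 0)); last first.
  apply: eq_bigr => l _.
  case: (leqP i l) => h1; last by rewrite mul0r.
  rewrite /H; case: (leqP j (n - l)) => h2.
    rewrite ifT; last by (have := ltn_ord l; rewrite /L; lia).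
    congr (_ * _); congr (dH _ _); lia.
  by rewrite ifF ?mulr0 //; lia.
rewrite sum_shift.
rewrite (big_ord_widen (n.+1 - i) (fun u => dH c u * dH d (L - u))); last by lia.
by rewrite big_mkcond.
Qed.

Lemma dHS1 j : le_m m j -> dH (1 : k) j = (j == 0)%:R.
Proof.
elim: j {-2}j (leqnn j) => [|J IH] j hj hm.
  have -> : j = 0%N by lia.
  by rewrite /dHS (hcls_eq (hs_d_one m k)).
case: j hj hm => [|j] hj hm; first by rewrite /dHS (hcls_eq (hs_d_one m k)).
have h0 : dH (1 : k) 0 = 1 by rewrite /dHS (hcls_eq (hs_d_one m k)).
have := dHS_mul m k (1 : k) 1 j.+1 hm; rewrite mulr1 big_ord_recl big_ord_recr /=.
rewrite h0 mul1r subn0 subnn h0 mulr1 big1; last first.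
  move=> i _; rewrite /bump leq0n add1n IH /=.
  - by rewrite mulr0n mul0r.
  - by have := ltn_ord i; lia.
  - by apply: le_m_mono hm _; have := ltn_ord i; lia.
rewrite /bump leq0n add1n add0r => E.
by apply: (@addrI _ (dH (1 : k) j.+1)); rewrite addr0 -E.
Qed.
End P.

Theorem proposition6p4 (p : nat) (k : comPzRingType) (m : option nat) :
  prime p -> (p%:R : k) = 0 ->
  trunc_ring_hom m (phi m (k:=k)).
Proof.
move=> _ _; split.
- move=> a b h n hn; apply: phi_local => l hl; apply: h; exact: le_m_mono hn hl.
- move=> a b n hn; rewrite /phi /ps_add -big_split; apply: eq_bigr => i _.
  exact: dHS_add.
- move=> a b n hn.
  pose A l := \sum_(i < n.+1) mono (a i) i l.
  pose B l := \sum_(i < n.+1) mono (b i) i l.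
  rewrite (@phi_local m k _ (ps_mul A B)); last first.
    move=> l hl; apply: ps_mul_local => l' hl'; apply: trunc_decomp; lia.
  rewrite (@ps_mul_local _ _ (phi m A) _ (phi m B)); last first.
  - move=> l hl; apply: phi_local => l' hl'; apply: trunc_decomp; lia.
  - move=> l hl; apply: phi_local => l' hl'; apply: trunc_decomp; lia.
  rewrite (@phi_local m k _ (fun l => \sum_(i < n.+1) (fun l =>
      \sum_(j < n.+1) mono (a i * b j) (i + j) l) l)); last first.
    move=> l _; rewrite (ps_mul_suml _ n.+1 (fun i => mono (a i) i)); apply: eq_bigr => i _.
    rewrite (ps_mul_sumr _ n.+1 (fun j => mono (b j) j)); apply: eq_bigr => j _; exact: ps_mul_mono.
  rewrite (phi_sum m k n.+1 (fun i l => \sum_(j < n.+1) mono (a i * b j) (i + j) l)).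
  rewrite (@ps_mul_local _ _ (fun l => \sum_(i < n.+1) phi m (mono (a i) i) l) _
             (fun l => \sum_(j < n.+1) phi m (mono (b j) j) l)); last first.
  - by move=> l _; rewrite /B (phi_sum m k n.+1 (fun j => mono (b j) j)).
  - by move=> l _; rewrite /A (phi_sum m k n.+1 (fun j => mono (a j) j)).
  rewrite (ps_mul_suml _ n.+1 (fun i => phi m (mono (a i) i))); apply: eq_bigr => i _.
  rewrite (phi_sum m k n.+1 (fun j l => mono (a i * b j) (i + j) l)) (ps_mul_sumr _ n.+1 (fun j => phi m (mono (b j) j))); apply: eq_bigr => j _.
  exact: key.
- move=> n hn; rewrite /phi big_ord_recl big1 ?addr0.
    by rewrite subn0 /ps_one /= mulr1n dHS1.
  by move=> i _; rewrite /ps_one /= mulr0n dHS0.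
Qed.
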